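(* Let $\mathbb X,\mathbb Y,\mathbb X^\sharp,\mathbb Y^\sharp$ be sets and let $c:\mathbb X\times\mathbb X^\sharp\to\overline{\mathbb R}$ and $d:\mathbb Y\times\mathbb Y^\sharp\to\overline{\mathbb R}$ be coupling functions. Let $K:\mathbb X\times\mathbb Y\to\overline{\mathbb R}$, $f:\mathbb X\to\overline{\mathbb R}$ and $g:\mathbb Y\to\overline{\mathbb R}$ be arbitrary functions. If $$f(x)\ \ge\ \inf_{y\in\mathbb Y}\big(K(x,y)\mathbin{\overset{\cdot}{+}} g(y)\big)\quad\text{for all }x\in\mathbb X,$$ then $$f^{c}(x^\sharp)\ \le\ \inf_{y^\sharp\in\mathbb Y^\sharp}\big(K^{c\mathbin{\underset{\cdot}{+}} d}(x^\sharp,y^\sharp)\mathbin{\overset{\cdot}{+}} g^{-d}(y^\sharp)\big)\quad\text{for all }x^\sharp\in\mathbb X^\sharp.$$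
   Context: $\overline{\mathbb R}=[-\infty,+\infty]$. The Moreau lower addition $\mathbin{\underset{\cdot}{+}}$ is the usual addition extended by $(+\infty)\mathbin{\underset{\cdot}{+}}(-\infty)=(-\infty)\mathbin{\underset{\cdot}{+}}(+\infty)=-\infty$; the Moreau upper addition $\mathbin{\overset{\cdot}{+}}$ is the usual addition extended by $(+\infty)\mathbin{\overset{\cdot}{+}}(-\infty)=(-\infty)\mathbin{\overset{\cdot}{+}}(+\infty)=+\infty$. For a coupling $c:\mathbb X\times\mathbb X^\sharp\to\overline{\mathbb R}$ and $f:\mathbb X\to\overline{\mathbb R}$, the Fenchel–Moreau conjugate is $f^{c}(x^\sharp)=\sup_{x\in\mathbb X}\big(c(x,x^\sharp)\mathbin{\underset{\cdot}{+}}(-f(x))\big)$. In particular $g^{-d}(y^\sharp)=\sup_{y\in\mathbb Y}\big((-d(y,y^\sharp))\mathbin{\underset{\cdot}{+}}(-g(y))\big)$. The sum coupling $c\mathbin{\underset{\cdot}{+}} d$ between $\mathbb X\times\mathbb Y$ and $\mathbb X^\sharp\times\mathbb Y^\sharp$ is $((x,y),(x^\sharp,y^\sharp))\mapsto c(x,x^\sharp)\mathbin{\underset{\cdot}{+}} d(y,y^\sharp)$, so that $K^{c\mathbin{\underset{\cdot}{+}} d}(x^\sharp,y^\sharp)=\sup_{x\in\mathbb X,y\in\mathbb Y}\big(c(x,x^\sharp)\mathbin{\underset{\cdot}{+}} d(y,y^\sharp)\mathbin{\underset{\cdot}{+}}(-K(x,y))\big)$. *)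

(* Defs.v *)
From mathcomp Require Import all_boot all_algebra all_classical all_reals.
From mathcomp Require Import ereal.
Import Num.Theory.
Local Open Scope classical_set_scope.
Local Open Scope ereal_scope.

(* Conventions: in MathComp-Analysis, [x + y] on \bar R is the Moreau lower
   addition (+oo + -oo = -oo) and [x +' y] is the Moreau upper addition
   (+oo +' -oo = +oo). *)

Definition fm_conj {R : realType} {X Xs : Type}
  (c : X -> Xs -> \bar R) (f : X -> \bar R) : Xs -> \bar R :=
  fun xs => ereal_sup [set c x xs + - f x | x in [set: X]].

Definition sum_coupling {R : realType} {X Y Xs Ys : Type}
  (c : X -> Xs -> \bar R) (d : Y -> Ys -> \bar R) :
  (X * Y) -> (Xs * Ys) -> \bar R :=
  fun p q => c p.1 q.1 + d p.2 q.2.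

(* Main.v *)
Require Import Defs.
From mathcomp Require Import all_boot all_algebra all_classical all_reals.
From mathcomp Require Import order ereal lra.
Import Order.TTheory Num.Theory.
Local Open Scope classical_set_scope.
Local Open Scope ereal_scope.

Lemma pw (R : realType) (a e k h A B : \bar R) :
  a + e + - k <= A -> - e + - h <= B -> a + - dual_adde k h <= dual_adde A B.
Proof.
case: a => [a||]; case: e => [e||]; case: k => [k||]; case: h => [h||];
case: A => [A||]; case: B => [B||]; rewrite /dual_adde /adde /= ?lee_fin ?leey ?leNye //;
rewrite ?lee_fin; lra.
Qed.

Lemma supL (R : realType) (a M : \bar R) (S : set \bar R) :
  (forall s, S s -> a + s <= M) -> a + ereal_sup S <= M.
Proof.
move=> HS; case: a HS => [r||] HS.
- rewrite -leeBrDl //; apply/ereal_supP => s Ss.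
  by rewrite leeBrDl //; apply: HS.
- have [->|] := eqVneq (ereal_sup S) -oo; first by rewrite addeNy leNye.
  rewrite -ltNye => /ereal_sup_gt [s Ss Hs].
  have := HS s Ss; rewrite addye; last by rewrite (gt_eqF Hs).
  by rewrite leye_eq => /eqP ->; rewrite leey.
- by rewrite addNye leNye.
Qed.

Theorem theorem1 (R : realType) (X Y Xs Ys : Type)
  (c : X -> Xs -> \bar R) (d : Y -> Ys -> \bar R)
  (K : X -> Y -> \bar R) (f : X -> \bar R) (g : Y -> \bar R) :
  (forall x : X, ereal_inf [set dual_adde (K x y) (g y) | y in [set: Y]] <= f x) ->
  forall xs : Xs,
    fm_conj c f xs <=
    ereal_inf [set dual_adde
                   (fm_conj (sum_coupling c d) (fun p => K p.1 p.2) (xs, ys))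
                   (fm_conj (fun y ys => - d y ys) g ys) | ys in [set: Ys]].
Proof.
move=> H xs; apply: le_ereal_inf_tmp => _ [ys _ <-].
apply/ereal_supP => _ [x _ <-].
apply: le_trans (leeD2l _ (_ : - f x <= - ereal_inf [set dual_adde (K x y) (g y) | y in [set: Y]])) _.
  by rewrite leeN2.
rewrite ereal_infEN oppeK; apply: supL => _ [_ [y _ <-] <-].
apply: (@pw _ _ (d y ys)).
- by apply: ereal_sup_ubound; exists (x, y).
- by apply: ereal_sup_ubound; exists y.
Qed.
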